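(* Let $p(x)$, $q(x)$, $r(x)$ be probability mass functions on the same finite support set $\mathcal{X}$. Let $c_1=\min_{x\in\mathcal{X}}\frac{p(x)(1-p(x))}{3(1+p(x))^2}$ and $p_m=\min_{x}p(x)$, and assume $c_1>0$ and $p_m>0$. Suppose $D_{\mathsf{KL}}(p\|q)\le\tau\le c_1$ and that for all $x\in\mathcal{X}$, $\gamma_1\le \frac{p(x)}{r(x)}\le\gamma_2$. Then for all $x\in\mathcal{X}$, with $g(\tau,p_m)=\sqrt{3\tau/p_m}$, \[ \gamma_1\exp\big(-g(\tau,p_m)\big)\le\frac{q(x)}{r(x)}\le\gamma_2\exp\big(g(\tau,p_m)\big). \]
   Context: $D_{\mathsf{KL}}(p\|q)=\sum_x p(x)\log\frac{p(x)}{q(x)}$ is the Kullback–Leibler divergence. *)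

(* Defs.v *)
From mathcomp Require Import all_boot all_order all_algebra.
From mathcomp Require Import all_classical all_reals all_analysis.
Set Implicit Arguments. Unset Strict Implicit. Unset Printing Implicit Defensive.
Import Order.TTheory GRing.Theory Num.Theory.
Local Open Scope ring_scope.

Definition pmf_full_support (R : realType) (T : finType) (p : T -> R) : Prop :=
  (forall x, 0 < p x) /\ \sum_(x : T) p x = 1.

Definition KL (R : realType) (T : finType) (p q : T -> R) : R :=
  \sum_(x : T) p x * ln (p x / q x).

Definition is_min_over (R : realType) (T : finType) (f : T -> R) (m : R) : Prop :=
  (exists x, m = f x) /\ (forall x, m <= f x).

Definition gfun (R : realType) (tau pm : R) : R := Num.sqrt (3 * tau / pm).

(* Main.v *)
Require Import Defs.
From mathcomp Require Import all_boot all_order all_algebra.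
From mathcomp Require Import all_classical all_reals all_analysis.
From mathcomp Require Import ring lra.
Import Order.TTheory GRing.Theory Num.Theory.
Local Open Scope ring_scope.
Lemma poly8 (R : realType) (z : R) : -1/8 <= z ->
  1 + 8*z + 64/3 * z^+2 <= (1+z)^+8.
Proof.
move=> hz.
have h : (1+z)^+8 - (1 + 8*z + 64/3 * z^+2) = z^+2 * (20/3 + 56*z + 70*z^+2 + 56*z^+3 + 28*z^+4 + 8*z^+5 + z^+6).
  by rewrite !exprS expr0; field.
rewrite -subr_ge0 h; apply: mulr_ge0; first exact: sqr_ge0.
case: (lerP 0 z) => hz0.
  have := sqr_ge0 z; have : 0 <= z^+3 by rewrite exprn_ge0.
  have : 0 <= z^+4 by rewrite exprn_ge0.
  have : 0 <= z^+5 by rewrite exprn_ge0.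
  have : 0 <= z^+6 by rewrite exprn_ge0.
  lra.
have e3 : z^+3 = z * z^+2 by rewrite exprS.
have e5 : z^+5 = z^+3 * z^+2 by rewrite -exprD.
have e4 : z^+4 = z^+2 * z^+2 by rewrite -exprD.
have e6 : z^+6 = z^+3 * z^+3 by rewrite -exprD.
rewrite e5 e4 e6 e3.
have e2: z^+2 = z * z by rewrite expr2.
rewrite e2.
nra.
Qed.

Lemma exp8 (R : realType) (l : R) : -8 <= l -> (1 + l/8)^+8 <= expR l.
Proof.
move=> hl.
have -> : expR l = expR (l/8) ^+ 8 by rewrite -expRM_natr; congr expR; field.
apply: lerXn2r; rewrite ?nnegrE ?expR_ge0 //; last exact: expR_ge1Dx.
lra.
Qed.

Lemma key (R : realType) (l : R) :
  expR l - 1 - l < 1/3 -> l^+2 <= 3 * (expR l - 1 - l).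
Proof.
move=> h.
case: (lerP l (-1)) => hl.
  have e8 := @exp8 R (-1) ltac:(lra).
  have p8 : (1 + (-1)/8 : R)^+8 = (7/8)^+8 by congr (_ ^+ _); field.
  rewrite p8 in e8.
  have c : 1/3 < ((7/8)^+8 : R).
    rewrite !exprS expr0; lra.
  have hle : expR (-1) <= (1 : R) by rewrite expR_le1; lra.
  have hx : expR l = expR (-1) * expR (l + 1) by rewrite -expRD; congr expR; ring.
  have h1 := expR_ge1Dx (l + 1).
  have : expR (-1) * (1 + (l+1)) <= expR (-1) * expR (l + 1).
    by apply: ler_wpM2l; [exact: expR_ge0|].
  rewrite -hx in h *.
  nra.
have e8 := @exp8 R l ltac:(lra).
have := @poly8 R (l/8) ltac:(lra).
have -> : (1 + 8 * (l / 8) + 64 / 3 * (l / 8) ^+ 2 : R) = 1 + l + l^+2/3.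
  by rewrite expr2; field.
lra.
Qed.

Theorem lemma1 (R : realType) (T : finType) (p q r : T -> R)
    (c1 pm tau gamma1 gamma2 : R) :
  pmf_full_support p -> pmf_full_support q -> pmf_full_support r ->
  is_min_over (fun x => p x * (1 - p x) / (3 * (1 + p x) ^+ 2)) c1 ->
  is_min_over p pm ->
  0 < c1 -> 0 < pm ->
  KL p q <= tau -> tau <= c1 ->
  (forall x, gamma1 <= p x / r x /\ p x / r x <= gamma2) ->
  forall x, gamma1 * expR (- gfun tau pm) <= q x / r x /\
            q x / r x <= gamma2 * expR (gfun tau pm).
Proof.
move=> [p0 p1] [q0 q1] [r0 r1] [_ c1min] [_ pmmin] c10 pm0 hKL htc hg x.
pose L y := ln (q y / p y).
have eL y : expR (L y) = q y / p y by rewrite /L lnK // posrE divr_gt0.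
have KLe : KL p q = \sum_y p y * (expR (L y) - 1 - L y).
  have -> : \sum_y p y * (expR (L y) - 1 - L y)
      = \sum_y q y - \sum_y p y - \sum_y p y * L y.
    rewrite -sumrB -sumrB; apply: eq_bigr => y _.
    rewrite eL; have := p0 y; move=> py; field; lra.
  rewrite q1 p1 subrr sub0r /KL -sumrN; apply: eq_bigr => y _.
  rewrite /L -mulrN -lnV ?posrE ?divr_gt0 // invf_div //.
have term : p x * (expR (L x) - 1 - L x) <= KL p q.
  rewrite KLe (bigD1 x) //= lerDl; apply: sumr_ge0 => y _.
  apply: mulr_ge0; first exact: ltW.
  have := expR_ge1Dx (L y); lra.
have px0 := p0 x.
have ph : p x * (1 - p x) / (3 * (1 + p x) ^+ 2) < p x / 3.
  have hd : 0 < 3 * (1 + p x) ^+ 2 by apply: mulr_gt0 => //; apply: exprn_gt0; lra.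
  rewrite ltr_pdivrMr // mulrAC ltr_pdivlMr //.
  rewrite expr2; nra.
have hc := c1min x; simpl in hc.
set phi := expR (L x) - 1 - L x in term.
have phi0 : 0 <= phi by have := expR_ge1Dx (L x); rewrite /phi; lra.
have hpt : p x * phi <= tau by lra.
have hphi : phi < 1/3.
  rewrite ltNge; apply/negP => hh.
  have : p x * (1/3) <= p x * phi by rewrite ler_pM2l.
  lra.
have k := @key R _ hphi; rewrite -/phi in k.
have tau0 : 0 <= tau by have := mulr_ge0 (ltW px0) phi0; lra.
have pmx := pmmin x.
have hL2 : L x ^+ 2 <= 3 * tau / pm.
  have h1 : L x ^+ 2 <= 3 * tau / p x.
    rewrite ler_pdivlMr //; have := ler_wpM2r (ltW px0) k; lra.
  apply: (le_trans h1); apply: ler_wpM2l; first lra.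
  by rewrite lef_pV2 ?posrE.
have habs : `|L x| <= gfun tau pm.
  by rewrite /gfun -sqrtr_sqr ler_wsqrtr.
have /andP[hlo hhi] : - gfun tau pm <= L x <= gfun tau pm by rewrite -ler_norml habs.
have qr : q x / r x = expR (L x) * (p x / r x).
  rewrite eL; have := r0 x; move=> rx; field; lra.
have [g1 g2] := hg x.
have pr0 : 0 <= p x / r x by apply: divr_ge0; apply: ltW.
have e1 : expR (L x) <= expR (gfun tau pm) by rewrite ler_expR.
have e2 : expR (- gfun tau pm) <= expR (L x) by rewrite ler_expR.
have e3 := expR_ge0 (gfun tau pm).
have e4 := expR_ge0 (- gfun tau pm).
rewrite qr; split.
  apply: (le_trans (y := expR (- gfun tau pm) * (p x / r x))).
    by rewrite [X in _ <= X]mulrC ler_wpM2r.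
  by rewrite ler_wpM2r.
apply: (le_trans (y := expR (gfun tau pm) * (p x / r x))).
  by rewrite ler_wpM2r.
by rewrite [X in X <= _]mulrC ler_wpM2r.
Qed.
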